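(* There is a function $C(t,\epsilon)$ such that the following holds for every positive integer $t$ and every $\epsilon\in(0,1)$: let $G$ be a connected balanced bipartite graph with parts $X,Y$, with $\delta(G)\geq C(t,\epsilon)$ and with no induced $S_{t,t}$. Then for all $x\in X$ and $y\in Y$ we have $|N(x)\cap U_Y(\epsilon)|\leq C(t,\epsilon)$ and $|N(y)\cap U_X(\epsilon)|\leq C(t,\epsilon)$.
   Context: For positive integers $a,b$, the biclaw $S_{a,b}$ is the graph with vertex set $\{x,x_1,\dots,x_a,y,y_1,\dots,y_b\}$ and edges $xy$, $xy_1,\dots,xy_b$, $yx_1,\dots,yx_a$; ''no induced $S_{t,t}$'' means no induced subgraph isomorphic to $S_{t,t}$. Balanced means $|X|=|Y|$. For a bipartite graph with parts $X,Y$, $\Delta_X=\max_{x\in X} d(x)$, $\Delta_Y=\max_{y\in Y}d(y)$, and for $\epsilon\in(0,1)$, $U_X(\epsilon)=\{x\in X: d(x)\leq (1-\epsilon)\Delta_X\}$, $U_Y(\epsilon)=\{y\in Y: d(y)\leq(1-\epsilon)\Delta_Y\}$. $N(v)$ is the neighbourhood and $\delta(G)$ the minimum degree. *)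

(* Defs.v *)
From mathcomp Require Import all_boot all_order all_algebra.
From mathcomp Require Import reals.
Set Implicit Arguments. Unset Strict Implicit. Unset Printing Implicit Defensive.
Import Order.TTheory GRing.Theory Num.Theory.

Definition simple_graph (T : finType) (e : rel T) : Prop :=
  symmetric e /\ irreflexive e.

Definition nbhd (T : finType) (e : rel T) (v : T) : {set T} := [set w | e v w].
Definition deg (T : finType) (e : rel T) (v : T) : nat := #|nbhd e v|.

Definition connected_graph (T : finType) (e : rel T) : Prop :=
  forall u v : T, connect e u v.

Definition bipartite_parts (T : finType) (e : rel T) (X Y : {set T}) : Prop :=
  [/\ X :&: Y = set0, X :|: Y = setT &
      forall u v, e u v -> (u \in X /\ v \in Y) \/ (u \in Y /\ v \in X)].

Definition balanced (T : finType) (X Y : {set T}) : Prop := #|X| = #|Y|.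

Definition min_deg_ge (T : finType) (e : rel T) (k : nat) : Prop :=
  forall v : T, k <= deg e v.

(* Biclaw S_{a,b}: vertices inl true = x, inl false = y,
   inr (inl i) = x_i (i < a), inr (inr j) = y_j (j < b);
   edges xy, x y_j, y x_i. *)
Definition biclaw_V (a b : nat) : finType := (bool + ('I_a + 'I_b))%type.

Definition biclaw_adj (a b : nat) : rel (biclaw_V a b) :=
  fun u v =>
    match u, v with
    | inl p, inl q => p != q
    | inl true, inr (inr _) => true
    | inr (inr _), inl true => true
    | inl false, inr (inl _) => true
    | inr (inl _), inl false => true
    | _, _ => false
    end.

Definition has_induced_biclaw (T : finType) (e : rel T) (a b : nat) : Prop :=
  exists f : biclaw_V a b -> T,
    injective f /\ forall u v, e (f u) (f v) = biclaw_adj u v.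

Local Open Scope ring_scope.

Definition maxdeg (T : finType) (e : rel T) (X : {set T}) : nat :=
  (\max_(x in X) deg e x)%N.

(* U_X(eps) = { x in X : d(x) <= (1 - eps) Delta_X }. *)
Definition lowdeg (R : realType) (T : finType) (e : rel T) (X : {set T})
  (eps : R) : {set T} :=
  [set x in X | (deg e x)%:R <= (1 - eps) * (maxdeg e X)%:R].

(* Main.v *)
Require Import Defs.
From mathcomp Require Import all_boot all_order all_algebra.
From mathcomp Require Import reals.
From mathcomp Require Import zify lra.
Set Implicit Arguments. Unset Strict Implicit. Unset Printing Implicit Defensive.

Lemma card_diff (T : finType) (A B : {set T}) : #|A| <= #|A :\: B| + #|B|.
Proof.
rewrite -(cardsID B A) addnC leq_add2l; apply: subset_leq_card; exact: subsetIr.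
Qed.

Section Count.
Variables (T : finType) (nadj : T -> T -> bool) (r t : nat).

Lemma card_sep (A : {set T}) (b : pred T) :
  #|[set q in A | b q]| = \sum_(q in A) (b q : nat).
Proof.
rewrite -sum1_card big_mkcond /= [RHS]big_mkcond /=.
apply: eq_bigr => q _; rewrite !inE; by case: (q \in A); case: (b q).
Qed.

Lemma step_count (P Tj F' : {set T}) (j : nat) :
  0 < r -> j < t -> #|Tj| = j -> F' != set0 ->
  (forall q, q \in F' -> #|P| <= r * #|[set p in P | nadj q p]| /\ 2*t <= #|[set p in P | nadj q p]|) ->
  exists2 p, p \in P :\: Tj & #|F'| <= #|[set q in F' | nadj q p]| * (2*r).
Proof.
move=> r0 jt cT /set0Pn [q0 q0F] H.
set S := P :\: Tj.
have HM : forall q, q \in F' -> #|P| <= 2 * r * #|[set p in S | nadj q p]| /\ 0 < #|[set p in S | nadj q p]|.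
  move=> q qF; have [H1 H2] := H q qF.
  have : #|[set p in P | nadj q p]| <= #|[set p in S | nadj q p]| + j.
    rewrite -cT; apply: leq_trans (card_diff _ Tj) _; rewrite leq_add2r.
    apply: subset_leq_card; apply/subsetP=> p; rewrite !inE; by case: (p \in Tj); case: (p \in P); case: (nadj q p).
  nia.
have Sne : 0 < #|S|.
  have [_ h] := HM q0 q0F; apply: leq_trans h _; apply: subset_leq_card.
  apply/subsetP=> p; rewrite inE; by case/andP.
case: (boolP [exists p in S, #|F'| <= #|[set q in F' | nadj q p]| * (2*r)]).
  by case/exists_inP=> p pS hp; exists p.
rewrite negb_exists_in => /forall_inP Hn.
have E : \sum_(p in S) #|[set q in F' | nadj q p]| = \sum_(q in F') #|[set p in S | nadj q p]|.
  under eq_bigr do rewrite card_sep.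
  rewrite exchange_big /=; apply: eq_bigr => q _; by rewrite card_sep.
have L1 : #|F'| * #|P| <= 2 * r * \sum_(q in F') #|[set p in S | nadj q p]|.
  rewrite big_distrr /= -sum1_card big_distrl /=; apply: leq_sum => q qF.
  rewrite mul1n; by case: (HM q qF).
have L2 : (2 * r * \sum_(p in S) #|[set q in F' | nadj q p]|) + #|S| <= #|S| * #|F'|.
  rewrite big_distrr /= -[#|S|]sum1_card big_distrl /= -big_split /=.
  apply: leq_sum => p pS; rewrite mul1n; have := Hn p pS; rewrite -ltnNge; lia.
have SP : #|S| <= #|P| by apply: subset_leq_card; apply/subsetP=> p; rewrite inE; case/andP.
rewrite E in L2.
have : #|F'| * #|S| <= #|F'| * #|P| by rewrite leq_mul2l SP orbT.
lia.
Qed.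

Lemma iter_count (P F : {set T}) :
  0 < r -> 0 < t ->
  (forall q, q \in F -> #|P| <= r * #|[set p in P | nadj q p]| /\ 2*t <= #|[set p in P | nadj q p]|) ->
  t * (2*r) ^ t <= #|F| ->
  forall j, j <= t -> exists Tj F' : {set T},
    [/\ Tj \subset P, #|Tj| = j, F' \subset F, #|F| <= #|F'| * (2*r) ^ j &
        forall p q, p \in Tj -> q \in F' -> nadj q p].
Proof.
move=> r0 t0 H HF; elim=> [|j IH] jt.
  exists set0, F; split=> //; [exact: sub0set | by rewrite cards0 | by rewrite expn0 muln1 | by move=> p q; rewrite inE].
have [Tj [F' [TP cT FF HFF Hn]]] := IH (ltnW jt).
have F'ne : F' != set0.
  apply/eqP=> F0; move: HFF; rewrite F0 cards0 mul0n => h.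
  have : 0 < t * (2*r) ^ t by rewrite muln_gt0 t0 expn_gt0 muln_gt0 r0.
  lia.
have H' : forall q, q \in F' -> #|P| <= r * #|[set p in P | nadj q p]| /\ 2*t <= #|[set p in P | nadj q p]|.
  by move=> q qF; apply: H; apply: (subsetP FF).
have [p pS hp] := step_count r0 jt cT F'ne H'.
move: pS; rewrite inE => /andP[pT pP].
exists (p |: Tj), [set q in F' | nadj q p]; split.
- by rewrite subUset sub1set pP TP.
- by rewrite cardsU1 pT cT.
- apply: subset_trans FF; apply/subsetP=> q; rewrite inE; by case/andP.
- rewrite expnS mulnA; apply: leq_trans HFF _; by rewrite leq_mul2r hp orbT.
- move=> p' q; rewrite !inE => /orP[/eqP->|p'T] /andP[qF nq] //; exact: Hn.
Qed.

Lemma anti_exists (P F : {set T}) :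
  0 < r -> 0 < t ->
  (forall q, q \in F -> #|P| <= r * #|[set p in P | nadj q p]| /\ 2*t <= #|[set p in P | nadj q p]|) ->
  t * (2*r) ^ t <= #|F| ->
  exists A B : {set T}, [/\ A \subset P, B \subset F, t <= #|A|, t <= #|B| &
        forall a b, a \in A -> b \in B -> nadj b a].
Proof.
move=> r0 t0 H HF.
have [A [B [AP cA BF HB Hn]]] := iter_count r0 t0 H HF (leqnn t).
exists A, B; split=> //; first by rewrite cA.
have : t * (2*r) ^ t <= #|B| * (2*r) ^ t by apply: leq_trans HF HB.
rewrite leq_mul2r expn_eq0 muln_eq0 /= (negbTE (lt0n_neq0 r0)) /=.
by [].
Qed.
End Count.


Section Graph.
Variables (T : finType) (e : rel T) (X Y : {set T}) (t : nat).
Hypotheses (esym : symmetric e) (eirr : irreflexive e) (bip : bipartite_parts e X Y)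
  (noS : ~ has_induced_biclaw e t t).

Lemma sides u v : e u v -> (u \in X) = (v \in Y) /\ (u \in Y) = (v \in X).
Proof.
case: bip => I U H euv.
have hx : forall w, (w \in X) = (w \notin Y).
  move=> w; have : w \in X :|: Y by rewrite U inE.
  have : w \notin X :&: Y by rewrite I inE.
  rewrite !inE; by case: (w \in X); case: (w \in Y).
case: (H u v euv) => [[uX vY]|[uY vX]].
  move: (hx u) (hx v) uX vY => -> ->; by case: (u \in Y); case: (v \in Y).
move: (hx u) (hx v) uY vX => -> ->; by case: (u \in Y); case: (v \in Y).
Qed.

Lemma tri u v w : e u v -> e v w -> ~~ e w u.
Proof.
move=> euv evw; apply/negP=> ewu.
have [a1 a2] := sides euv; have [b1 b2] := sides evw; have [c1 c2] := sides ewu.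
case: bip => I U _.
have : u \in X :|: Y by rewrite U inE.
have : u \notin X :&: Y by rewrite I inE.
rewrite !inE; move: a1 a2 b1 b2 c1 c2.
case: (u \in X); case: (u \in Y); case: (v \in X); case: (v \in Y); case: (w \in X); case: (w \in Y) => //.
Qed.

Lemma noanti u v (A B : {set T}) : e u v ->
  A \subset nbhd e v :\ u -> B \subset nbhd e u :\ v -> t <= #|A| -> t <= #|B| ->
  exists a b, [/\ a \in A, b \in B & e a b].
Proof.
move=> euv sA sB cA cB.
case: (boolP [exists a in A, exists b in B, e a b]).
  by case/exists_inP=> a aA /exists_inP [b bB eab]; exists a, b.
rewrite negb_exists_in => /forall_inP Hn; exfalso; apply: noS.
have hA : forall a, a \in A -> [/\ e v a, a != u & a != v].
  move=> a aA; have := subsetP sA a aA; rewrite !inE => /andP[au eva]; split=> //.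
  by apply/eqP=> av; move: eva; rewrite av eirr.
have hB : forall b, b \in B -> [/\ e u b, b != v & b != u].
  move=> b bB; have := subsetP sB b bB; rewrite !inE => /andP[bv eub]; split=> //.
  by apply/eqP=> bu; move: eub; rewrite bu eirr.
have nAB : forall a b, a \in A -> b \in B -> e a b = false.
  move=> a b aA bB; have := Hn a aA; rewrite negb_exists_in => /forall_inP h.
  exact: negbTE (h b bB).
have sA' := enum_uniq (mem A); have sB' := enum_uniq (mem B).
have zA : u \in A = false.
  by apply/negP=> uA; have [_ /eqP] := hA u uA.
set fA := fun i : 'I_t => nth u (enum A) i.
set fB := fun i : 'I_t => nth u (enum B) i.
have fAin : forall i, fA i \in A.
  move=> i; rewrite -mem_enum; apply: mem_nth; rewrite -cardE; exact: leq_trans (ltn_ord i) cA.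
have fBin : forall i, fB i \in B.
  move=> i; rewrite -mem_enum; apply: mem_nth; rewrite -cardE; exact: leq_trans (ltn_ord i) cB.
have fAinj : injective fA.
  move=> i j /eqP; rewrite /fA nth_uniq -?cardE //; [by move/eqP/val_inj| |];
  exact: leq_trans (ltn_ord _) cA.
have fBinj : injective fB.
  move=> i j /eqP; rewrite /fB nth_uniq -?cardE //; [by move/eqP/val_inj| |];
  exact: leq_trans (ltn_ord _) cB.
pose f := fun w : biclaw_V t t => match w with
  | inl true => u | inl false => v | inr (inl i) => fA i | inr (inr j) => fB j end.
have evu : e v u by rewrite esym.
have Ua : forall i, e u (fA i) = false.
  move=> i; have [h1 _ _] := hA _ (fAin i); rewrite esym; exact: negbTE (tri euv h1).
have aU : forall i, e (fA i) u = false by move=> i; rewrite esym Ua.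
have Va : forall i, e v (fA i) by move=> i; have [h1 _ _] := hA _ (fAin i).
have aV : forall i, e (fA i) v by move=> i; rewrite esym Va.
have Ub : forall i, e u (fB i) by move=> i; have [h1 _ _] := hB _ (fBin i).
have bU : forall i, e (fB i) u by move=> i; rewrite esym Ub.
have Vb : forall i, e v (fB i) = false.
  move=> i; have [h1 _ _] := hB _ (fBin i); rewrite esym; exact: negbTE (tri evu h1).
have bV : forall i, e (fB i) v = false by move=> i; rewrite esym Vb.
have aa : forall i j, e (fA i) (fA j) = false.
  move=> i j; exact: negbTE (tri (aV j) (Va i)).
have bb : forall i j, e (fB i) (fB j) = false.
  move=> i j; exact: negbTE (tri (bU j) (Ub i)).
have ab : forall i j, e (fA i) (fB j) = false by move=> i j; exact: nAB.
have ba : forall i j, e (fB j) (fA i) = false by move=> i j; rewrite esym ab.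
have nuv : (u == v) = false by case: eqP => // h; move: euv; rewrite h eirr.
have d1 : forall i, (fA i == u) = false by move=> i; have [_ h _] := hA _ (fAin i); exact: negbTE.
have d2 : forall i, (fA i == v) = false by move=> i; have [_ _ h] := hA _ (fAin i); exact: negbTE.
have d3 : forall i, (fB i == v) = false by move=> i; have [_ h _] := hB _ (fBin i); exact: negbTE.
have d4 : forall i, (fB i == u) = false by move=> i; have [_ _ h] := hB _ (fBin i); exact: negbTE.
have d5 : forall i j, (fA i == fB j) = false.
  move=> i j; case: eqP => // h; move: (Va i); by rewrite h Vb.
exists f; split.
- case=> [[]|[i|i]] [[]|[j|j]] //= h.
  all: try (move/eqP: h; rewrite ?nuv ?d1 ?d2 ?d3 ?d4 ?d5 // eq_sym ?nuv ?d1 ?d2 ?d3 ?d4 ?d5 //; fail).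
  + by have -> := fAinj _ _ h.
  + by have -> := fBinj _ _ h.
- case=> [[]|[i|i]] [[]|[j|j]] /=; by rewrite ?eirr ?Ua ?aU ?Va ?aV ?Ub ?bU ?Vb ?bV ?aa ?bb ?ab ?ba.
Qed.

Lemma setD_nb (P : {set T}) q : [set p in P | ~~ e q p] = P :\: nbhd e q.
Proof. by apply/setP=> p; rewrite !inE andbC. Qed.

Lemma typ r u v : 0 < r -> 0 < t -> e u v -> 2*t*r <= #|nbhd e v :\ u| ->
  #|[set q in nbhd e u :\ v | #|nbhd e v :\ u| <= r * #|(nbhd e v :\ u) :\: nbhd e q|]| < t*(2*r) ^ t.
Proof.
move=> r0 t0 euv big; rewrite ltnNge; apply/negP => HF.
have H : forall q, q \in [set q in nbhd e u :\ v | #|nbhd e v :\ u| <= r * #|(nbhd e v :\ u) :\: nbhd e q|] ->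
   #|nbhd e v :\ u| <= r * #|[set p in nbhd e v :\ u | ~~ e q p]| /\ 2*t <= #|[set p in nbhd e v :\ u | ~~ e q p]|.
  move=> q; rewrite inE setD_nb => /andP[_ h]; split=> //.
  have : 2*t*r <= r * #|(nbhd e v :\ u) :\: nbhd e q| by apply: leq_trans big h.
  rewrite mulnC leq_mul2l; case/orP=> //; by rewrite eqn0Ngt r0.
have [A [B [AP BF cA cB Hn]]] := anti_exists r0 t0 H HF.
have BN : B \subset nbhd e u :\ v.
  apply: subset_trans BF _; apply/subsetP=> q; rewrite inE; by case/andP.
have [a [b [aA bB eab]]] := noanti euv AP BN cA cB.
by move: (Hn a b aA bB); rewrite esym eab.
Qed.
End Graph.


Lemma ar1 r k t d Cmin : 4 <= r -> 4 * r * (k + t + 2) <= Cmin -> Cmin <= d -> 2*t*r <= d - 1.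
Proof. nia. Qed.

Lemma ar2 r c a b k d : c <= 1 + a + b -> r * a < d -> b < k -> r * c < r*(k+1) + d.
Proof. nia. Qed.

Lemma cardD1_le (T : finType) (A : {set T}) x : #|A| <= #|A :\ x| + 1.
Proof. rewrite (cardsD1 x A) addnC leq_add2l; by case: (x \in A). Qed.

Lemma ar3 r k t C d c fa fb : 4 <= r -> 4*r*(k+t+2) <= C -> C <= d ->
  d <= c + (fa + fb) + 1 + 1 -> fa < k -> fb < k -> 0 < c.
Proof. nia. Qed.
Lemma ar4 r k t C d a g w : 4 <= r -> 4*r*(k+t+2) <= C -> C <= d ->
  r * a < d - 1 -> r * g < r*(k+1) + d -> d - 1 <= a + g + w -> 0 < w.
Proof. nia. Qed.
Lemma ar5 r k t C D s m m1 m2 : 4 <= r -> 4*r*(k+t+2) <= C -> C <= D ->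
  s + m = D -> m <= m1 + m2 -> r * m1 <= D -> r * m2 < D -> k + 2 <= s.
Proof. nia. Qed.
Lemma ar6 r k t C d i j : 4 <= r -> 4*r*(k+t+2) <= C -> C <= d ->
  i + j = d - 1 -> r * j < d - 1 -> i <= k -> False.
Proof. nia. Qed.

Lemma ar7 r k t C d g w : 4 <= r -> 4*r*(k+t+2) <= C -> C <= d ->
  r * g < r*(k+1) + d -> w + g = d -> 0 < w.
Proof. nia. Qed.
Lemma ar8 r k t C D s m d1 a dq : 4 <= r -> 4*r*(k+t+2) <= C -> C <= D ->
  s + m = D -> r * m <= D -> s <= d1 -> d1 <= D -> d1 - 1 <= a + dq -> r * dq + 3*D <= r*D -> d1 - 1 <= r * a.
Proof. nia. Qed.
Lemma ar9 r k t C D s m d1 : 4 <= r -> 4*r*(k+t+2) <= C -> C <= D ->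
  s + m = D -> r * m <= D -> s <= d1 -> r * d1 + 3*D <= r*D -> False.
Proof. nia. Qed.

Lemma cardU_le (T : finType) (A B : {set T}) : #|A :|: B| <= #|A| + #|B|.
Proof. rewrite cardsU; exact: leq_subr. Qed.

Section Main.
Variables (T : finType) (e : rel T) (X Y : {set T}) (t r Cmin : nat).
Hypotheses (esym : symmetric e) (eirr : irreflexive e) (bip : bipartite_parts e X Y)
  (noS : ~ has_induced_biclaw e t t) (conn : connected_graph e)
  (r4 : 4 <= r) (t0 : 0 < t) (mind : forall v, Cmin <= deg e v)
  (hC : 4 * r * (t*(2*r) ^ t + t + 2) <= Cmin).

Local Notation N := (nbhd e).
Local Notation K := (t*(2*r) ^ t).

Lemma inN u v : (u \in N v) = e v u.
Proof. by rewrite inE. Qed.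

Lemma degD u v : e v u -> #|N v :\ u| = deg e v - 1.
Proof. move=> h; rewrite /deg (cardsD1 u (N v)) inN h add1n subn1 //. Qed.

Lemma Kpos : 0 < K.
Proof. by rewrite muln_gt0 t0 expn_gt0 muln_gt0 /= (leq_trans _ r4). Qed.

Lemma CminK : 4 * r * (K + t + 2) <= Cmin.
Proof. exact: hC. Qed.

Lemma typ' u v : e u v ->
  #|[set q in N u :\ v | #|N v :\ u| <= r * #|(N v :\ u) :\: N q|]| < K.
Proof.
move=> euv; apply: typ => //; [exact: bip | exact: (leq_trans _ r4) | ].
rewrite degD; [exact: ar1 r4 CminK (mind v) | by rewrite esym].
Qed.

Lemma XY_of u v : e u v -> u \in X -> v \in Y.
Proof. by move=> h; have [-> _] := sides bip h. Qed.
Lemma YX_of u v : e u v -> u \in Y -> v \in X.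
Proof. by move=> h; have [_ <-] := sides bip h. Qed.
Lemma notXY u : u \in X -> u \in Y -> False.
Proof.
case: bip => I _ _ uX uY; have : u \in X :&: Y by rewrite inE uX uY.
by rewrite I inE.
Qed.



Section Star.
Variables (ys : T).
Hypotheses (ysY : ys \in Y) (Dmax : forall y, y \in Y -> deg e y <= deg e ys).
Local Notation D := (deg e ys).
Local Notation Xs := (N ys).
Local Notation Good1 := [set y7 | r * #|Xs :\: N y7| <= D].
Local Notation Strong := [set y8 | K + 2 <= #|Xs :&: N y8|].

Lemma DC : Cmin <= D.
Proof. exact: mind. Qed.

Lemma stepA x' : x' \in Xs -> #|N x' :\: Good1| < K.
Proof.
rewrite inN => ex; have ex' : e x' ys by rewrite esym.
apply: leq_ltn_trans (typ' ex'); apply: subset_leq_card; apply/subsetP=> q.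
rewrite !inE => /andP[qG eq].
have qys : q != ys.
  apply/eqP=> qe; move: qG; rewrite qe setDv cards0 muln0; by [].
rewrite qys eq /=.
have h1 : #|Xs :\: N q| <= #|(N ys :\ x') :\: N q|.
  apply: subset_leq_card; apply/subsetP=> p; rewrite !inE => /andP[npq eyp].
  rewrite npq eyp andbT /=; apply/eqP=> px; move: npq; by rewrite px esym eq.
have h2 : #|N ys :\ x'| <= D by rewrite degD // leq_subr.
rewrite -ltnNge in qG.
apply: leq_trans h2 _; apply: ltnW; apply: leq_trans qG _; by rewrite leq_mul2l h1 orbT.
Qed.

Lemma stepB x y : e x y -> y \in Strong -> r * #|N x :\: Good1| < r*(K+1) + deg e x.
Proof.
move=> exy; rewrite inE => yS; have eyx : e y x by rewrite esym.
have Fsm := typ' eyx.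
set Fx := [set q in N y :\ x | _] in Fsm.
have : 0 < #|((Xs :&: N y) :\ x) :\: Fx|.
  have := card_diff ((Xs :&: N y) :\ x) Fx; have := cardD1_le (Xs :&: N y) x; lia.
rewrite card_gt0 => /set0Pn [x2]; rewrite !inE => /andP[nF /andP[x2x /andP[eysx2 eyx2]]].
have hx2 : r * #|(N x :\ y) :\: N x2| < #|N x :\ y|.
  move: nF; rewrite x2x eyx2 /= -ltnNge; by [].
have x2X : x2 \in Xs by rewrite inN.
have hA := stepA x2X.
have sub : N x :\: Good1 \subset [set y] :|: ((N x :\ y) :\: N x2) :|: (N x2 :\: Good1).
  apply/subsetP=> q; rewrite !inE => /andP[qG exq]; rewrite qG exq /= andbT.
  case: (q =P y) => //= _; by rewrite esym; case: (e q x2).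
have c1 := subset_leq_card sub.
have c2 := cardU_le ([set y] :|: ((N x :\ y) :\: N x2)) (N x2 :\: Good1).
have c3 := cardU_le [set y] ((N x :\ y) :\: N x2).
rewrite cards1 in c3.
have c4 : #|N x :\ y| <= deg e x by rewrite degD // leq_subr.
apply: (ar2 (a := #|(N x :\ y) :\: N x2|) (b := #|N x2 :\: Good1|)) => //.
  lia.
exact: leq_trans hx2 c4.
Qed.

Local Notation Xo := [set x9 in X | [exists y9, e x9 y9 && (y9 \in Strong)]].

Lemma stepC y x' xp : e y x' -> e y xp -> x' \in Xo -> xp \in X -> xp \in Xo.
Proof.
move=> eyx' eyxp x'o xpX.
case: (boolP (xp \in Xo)) => // xpno.
have nS : forall q, e xp q -> q \notin Strong.
  move=> q h; apply/negP=> qS; move/negP: xpno; apply; rewrite inE xpX; apply/existsP; exists q; by rewrite h qS.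
move: x'o; rewrite inE => /andP[x'X /existsP [ys' /andP[ex'ys' ys'S]]].
have hB := stepB ex'ys' ys'S.
have Fa := typ' eyx'; set FA := [set q in N y :\ x' | _] in Fa.
have Fb := typ' eyxp; set FB := [set q in N y :\ xp | _] in Fb.
have : 0 < #|((N y :\ x') :\ xp) :\: (FA :|: FB)|.
  have c1 := card_diff ((N y :\ x') :\ xp) (FA :|: FB).
  have c2 := cardU_le FA FB.
  have c3 := cardD1_le (N y :\ x') xp.
  have c4 := cardD1_le (N y) x'.
  apply: (ar3 r4 CminK (mind y) _ Fa Fb); rewrite /deg; lia.
rewrite card_gt0 => /set0Pn [x2]; rewrite !inE => /andP[nFAB /andP[x2p /andP[x2x' eyx2]]].
rewrite negb_or in nFAB; case/andP: nFAB => nFA nFB.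
have ha : r * #|(N x' :\ y) :\: N x2| < #|N x' :\ y|.
  move: nFA; rewrite x2x' eyx2 /= -ltnNge; by [].
have hb : r * #|(N xp :\ y) :\: N x2| < #|N xp :\ y|.
  move: nFB; rewrite x2p eyx2 /= -ltnNge; by [].
have ex'y : e x' y by rewrite esym.
have expy : e xp y by rewrite esym.
have yY : y \in Y := XY_of ex'y x'X.
have x2X : x2 \in X := YX_of eyx2 yY.
have : 0 < #|N x' :&: N x2 :&: Good1|.
  have sub : N x' :\ y \subset ((N x' :\ y) :\: N x2) :|: (N x' :\: Good1) :|: (N x' :&: N x2 :&: Good1).
    apply/subsetP=> q; rewrite !inE => /andP[qy ex'q]; rewrite qy ex'q /=.
    by case: (e x2 q); case: (r * _ <= _).
  have c1 := subset_leq_card sub.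
  have c2 := cardU_le ((N x' :\ y) :\: N x2 :|: (N x' :\: Good1)) (N x' :&: N x2 :&: Good1).
  have c3 := cardU_le ((N x' :\ y) :\: N x2) (N x' :\: Good1).
  rewrite (degD ex'y) in ha c1.
  apply: (ar4 r4 CminK (mind x') ha hB).
  apply: leq_trans c1 _; apply: leq_trans c2 _; by rewrite leq_add2r.
rewrite card_gt0 => /set0Pn [y1]; rewrite !inE => /andP[/andP[ex'y1 ex2y1] y1G].
have y1Y : y1 \in Y := XY_of ex2y1 x2X.
have dy1 := Dmax y1Y.
have Fc := typ' ex2y1; set FC := [set q in N x2 :\ y1 | _] in Fc.
have sub2 : (N xp :\ y) :&: N x2 \subset FC :|: [set y1].
  apply/subsetP=> q; rewrite !inE => /andP[/andP[qy expq] ex2q].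
  case: (q =P y1) => [->|qy1]; first by rewrite orbT.
  have qy1' : (q == y1) = false by apply/eqP.
  rewrite orbF ex2q /=.
  rewrite leqNgt; apply/negP => hq.
  have := nS q expq; rewrite inE; apply/negP; rewrite negbK.
  have s1 : Xs :\: N q \subset (Xs :\: N y1) :|: ((N y1 :\ x2) :\: N q).
    apply/subsetP=> p; rewrite !inE => /andP[nqp eysp]; rewrite nqp eysp /= andbT.
    case: (e y1 p) => //=; rewrite andbT; apply/eqP=> px2; move: nqp; by rewrite px2 esym ex2q.
  have m1 := subset_leq_card s1.
  have m2 := cardU_le (Xs :\: N y1) ((N y1 :\ x2) :\: N q).
  have m3 := cardsID (N q) Xs.
  have m4 : #|N y1 :\ x2| <= D.
    rewrite degD; [exact: leq_trans (leq_subr _ _) dy1 | by rewrite esym].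
  apply: (ar5 r4 CminK DC m3 (leq_trans m1 m2) y1G (leq_trans hq m4)).
have k1 := subset_leq_card sub2.
have k2 := cardU_le FC [set y1].
rewrite cards1 in k2.
have k3 := cardsID (N x2) (N xp :\ y).
rewrite (degD expy) in k3 hb.
exfalso; apply: (ar6 r4 CminK (mind xp) k3 hb).
apply: leq_trans k1 _; apply: leq_trans k2 _; by rewrite addn1.
Qed.


Local Notation Z := (Xo :|: [set w6 | [exists x6, (x6 \in Xo) && e x6 w6]]).

Lemma XoX x : x \in Xo -> x \in X.
Proof. by rewrite inE => /andP[]. Qed.

Lemma closedZ_X u v : e u v -> u \in X -> (u \in Z) = (v \in Z).
Proof.
move=> euv uX; have vY := XY_of euv uX.
apply/idP/idP => [uZ | vZ].
  have uo : u \in Xo.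
    move: uZ; rewrite in_setU => /orP[//|]; rewrite in_set => /existsP [x0 /andP[x0o ex0u]].
    by case: (notXY uX (XY_of ex0u (XoX x0o))).
  rewrite in_setU; apply/orP; right; rewrite in_set; apply/existsP; exists u; by rewrite uo euv.
rewrite in_setU; apply/orP; left.
move: vZ; rewrite in_setU => /orP[vo|]; first by case: (notXY (XoX vo) vY).
rewrite in_set => /existsP [x0 /andP[x0o ex0v]].
apply: (stepC (y := v) (x' := x0)) => //; by rewrite esym.
Qed.

Lemma closedZ : closed e Z.
Proof.
move=> u v euv.
case: bip => _ _ H; case: (H u v euv) => [[uX _]|[_ vX]].
  exact: closedZ_X.
have evu : e v u by rewrite esym.
by rewrite (closedZ_X evu vX).
Qed.

Lemma allXo x : x \in X -> x \in Xo.
Proof.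
move=> xX.
have : 0 < #|Xs| by apply: leq_trans DC; have := CminK; have := r4; clear; nia.
rewrite card_gt0 => /set0Pn [x1 x1s].
have x1X : x1 \in X by apply: YX_of ysY; rewrite -inN.
have x1o : x1 \in Xo.
  rewrite inE x1X; apply/existsP; exists ys; apply/andP; split; first by rewrite esym -inN.
  rewrite inE setIid; apply: leq_trans DC; have := CminK; have := r4; clear; nia.
have := closed_connect closedZ (conn x1 x).
rewrite in_setU x1o /= => h.
have : x \in Z by rewrite -h.
rewrite in_setU => /orP[//|]; rewrite in_set => /existsP [x0 /andP[x0o ex0x]].
by case: (notXY xX (XY_of ex0x (XoX x0o))).
Qed.

Lemma mainStar x : x \in X ->
  #|N x :&: [set y in Y | r * deg e y + 3 * D <= r * D]| <= K.
Proof.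
move=> xX; have := allXo xX; rewrite inE xX => /existsP [y /andP[exy yS]].
have hB := stepB exy yS.
have : 0 < #|N x :&: Good1|.
  apply: (ar7 r4 CminK (mind x) hB); exact: cardsID.
rewrite card_gt0 => /set0Pn [y1]; rewrite !inE => /andP[exy1 y1G].
have y1Y := XY_of exy1 xX.
have dy1 := Dmax y1Y.
have m3 := cardsID (N y1) Xs.
have sd1 : #|Xs :&: N y1| <= deg e y1 by apply: subset_leq_card; exact: subsetIr.
have Fc := typ' exy1.
apply: ltnW; apply: leq_ltn_trans Fc; apply: subset_leq_card; apply/subsetP=> q.
rewrite !inE => /andP[exq /andP[qY qlow]].
have qy1 : q != y1.
  apply/eqP=> qe; rewrite qe in qlow.
  exact: (ar9 r4 CminK DC m3 y1G sd1 qlow).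
rewrite qy1 exq /=.
have c1 := card_diff (N y1 :\ x) (N q).
rewrite (degD (u := x)) in c1 *; last by rewrite esym.
exact: (ar8 r4 CminK DC m3 y1G sd1 dy1 c1 qlow).
Qed.

End Star.
End Main.

Unset Implicit Arguments. Set Strict Implicit.
Import Order.TTheory GRing.Theory Num.Theory.
Local Open Scope ring_scope.

Lemma low_nat (R : realType) (eps : R) (r d M : nat) :
  3 <= r%:R * eps -> 0 < eps -> d%:R <= (1 - eps) * M%:R -> (r * d + 3 * M <= r * M)%N.
Proof.
move=> h3 e0 hd; rewrite -(ler_nat R) !natrD !natrM.
have M0 : 0 <= (M%:R : R) by [].
have r0 : 0 <= (r%:R : R) by [].
nra.
Qed.

Definition rr {R : realType} (eps : R) : nat := (Num.truncn (3 / eps)).+4.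

Lemma rr_ok (R : realType) (eps : R) : 0 < eps -> 3 <= (rr eps)%:R * eps.
Proof.
move=> e0.
have h : 3 / eps < (Num.truncn (3 / eps)).+1%:R by rewrite -truncn_le_nat.
have h2 : ((Num.truncn (3 / eps)).+1%:R : R) <= (rr eps)%:R by rewrite ler_nat /rr; lia.
have : 3 / eps * eps <= (rr eps)%:R * eps.
  rewrite ler_pM2r //; apply: ltW; exact: lt_le_trans h h2.
by rewrite mulfVK ?gt_eqF.
Qed.

Definition Cf {R : realType} (t : nat) (eps : R) : nat :=
  (4 * rr eps * (t * (2 * rr eps) ^ t + t + 2))%N.

Lemma bip_swap (T : finType) (e : rel T) (X Y : {set T}) :
  bipartite_parts e X Y -> bipartite_parts e Y X.
Proof.
case=> I U H; split; first by rewrite setIC.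
  by rewrite setUC.
move=> u v /H [[a b]|[a b]]; by [right | left].
Qed.

Lemma side_bound (R : realType) (t : nat) (eps : R) (T : finType) (e : rel T) (X Y : {set T}) :
 (0 < t)%N -> 0 < eps -> simple_graph e -> connected_graph e -> bipartite_parts e X Y ->
 min_deg_ge e (Cf t eps) -> ~ has_induced_biclaw e t t ->
 forall x, x \in X -> (#|nbhd e x :&: lowdeg e Y eps| <= Cf t eps)%N.
Proof.
move=> t0 e0 [es ei] conn bip mind noS x xX.
have r4 : (4 <= rr eps)%N by [].
have hC : (4 * rr eps * (t * (2 * rr eps) ^ t + t + 2) <= Cf t eps)%N by [].
have : (0 < #|nbhd e x|)%N.
  apply: leq_trans (mind x); rewrite /Cf !muln_gt0 /=; lia.
rewrite card_gt0 => /set0Pn [y0]; rewrite inE => exy0.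
have y0Y : y0 \in Y by have [h _] := sides bip exy0; rewrite -h.
have Yne : (0 < #|Y|)%N by rewrite card_gt0; apply/set0Pn; exists y0.
have [ys ysY Mys] := eq_bigmax_cond (deg e) Yne.
have Dmax : forall y, y \in Y -> (deg e y <= deg e ys)%N.
  move=> y yY; rewrite -Mys; exact: leq_bigmax_cond.
have hM := mainStar es ei bip noS conn r4 t0 mind hC ysY Dmax xX.
apply: leq_trans (_ : (t * (2 * rr eps) ^ t <= Cf t eps)%N); last first.
  rewrite /Cf; move: (t * _)%N => k; move: (rr eps) r4 => r r4'; nia.
apply: leq_trans hM; apply: subset_leq_card; apply/subsetP=> q.
rewrite !inE => /andP[exq /andP[qY hq]]; rewrite exq qY /=.
have : maxdeg e Y = deg e ys by rewrite /maxdeg Mys.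
move=> hm; rewrite hm in hq.
exact: (@low_nat R eps (rr eps) _ _ (@rr_ok R eps e0) e0 hq).
Qed.

Theorem mainTheorem10 (R : realType) :
  exists C : nat -> R -> nat,
    forall (t : nat) (eps : R), (0 < t)%N -> 0 < eps < 1 ->
    forall (T : finType) (e : rel T) (X Y : {set T}),
      simple_graph e -> connected_graph e -> bipartite_parts e X Y ->
      balanced X Y -> min_deg_ge e (C t eps) ->
      ~ has_induced_biclaw e t t ->
      (forall x, x \in X -> (#|nbhd e x :&: lowdeg e Y eps| <= C t eps)%N) /\
      (forall y, y \in Y -> (#|nbhd e y :&: lowdeg e X eps| <= C t eps)%N).
Proof.
exists Cf => t eps t0 /andP[e0 _] T e X Y sg conn bip _ mind noS; split.
  exact: (@side_bound R t eps T e X Y t0 e0 sg conn bip mind noS).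
exact: (@side_bound R t eps T e Y X t0 e0 sg conn (@bip_swap T e X Y bip) mind noS).
Qed.
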